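(* Let $\mathbb M=(V,d)$ be a binary structure and let $X,Y$ be disjoint non-empty modules of $\mathbb M$. Suppose $Y$ is a robust module with at least two elements whose Gallai quotient is not prime and such that $\{d(X,Y),d(Y,X)\}=t(Y)$. Then $X\cup Y$ is not a module of $\mathbb M$.
   Context: A binary structure over a set $W$ is a pair $\mathbb M=(V,d)$ with $d:V\times V\to W$. A module of $\mathbb M$ is a set $A\subseteq V$ such that $d(x,y)=d(x,y')$ and $d(y,x)=d(y',x)$ for all $x\in V\setminus A$ and $y,y'\in A$. A module is strong if for every module $B$, either $A\subseteq B$, $B\subseteq A$, or $A\cap B=\emptyset$. For $Z\subseteq V$, $S_{\mathbb M}(Z)$ is the intersection of all strong modules containing $Z$. A module is robust if it is a singleton or equals $S_{\mathbb M}(\{x,y\})$ for some distinct $x,y\in V$. For disjoint non-empty modules $X,Y$, $d(X,Y)$ denotes the common value of $d(x,y)$ for $x\in X$, $y\in Y$. For a strong module $A$ and $x,y\in A$, put $x\equiv_A y$ iff $x=y$ or some strong module containing $x,y$ is properly contained in $A$; the classes (components of $A$) are modules, and a robust $A$ with $|A|\ge 2$ has at least two components. The Gallai quotient of such $A$ is the binary structure on its set of components given by $(I,J)\mapsto d(I,J)$ for $I\ne J$; it is prime if it has at least three elements and only trivial modules (empty, singletons, whole set). If the Gallai quotient of $A$ is not prime, the type of $A$ is $t(A)=\{d(I,J): I,J$ distinct components of $A\}$. *)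

(* Defs.v *)
Set Implicit Arguments.

Section BinStruct.
Variables (V W : Type) (d : V -> V -> W).

Definition subset (A B : V -> Prop) : Prop := forall x, A x -> B x.
Definition disjoint (A B : V -> Prop) : Prop := forall x, A x -> B x -> False.
Definition set_eq (A B : V -> Prop) : Prop := forall x, A x <-> B x.

Definition is_module (A : V -> Prop) : Prop :=
  forall x y y', ~ A x -> A y -> A y' -> d x y = d x y' /\ d y x = d y' x.

Definition is_strong (A : V -> Prop) : Prop :=
  is_module A /\
  forall B, is_module B -> subset A B \/ subset B A \/ disjoint A B.

Definition S_M (Z : V -> Prop) : V -> Prop :=
  fun z => forall B, is_strong B -> subset Z B -> B z.

Definition is_robust (A : V -> Prop) : Prop :=
  is_module A /\
  ((exists x, set_eq A (fun z => z = x)) \/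
   (exists x y, x <> y /\ set_eq A (S_M (fun z => z = x \/ z = y)))).

Definition compeq (A : V -> Prop) (x y : V) : Prop :=
  x = y \/
  exists B, is_strong B /\ B x /\ B y /\ subset B A /\ ~ subset A B.

Definition comp (A : V -> Prop) (x : V) : V -> Prop :=
  fun y => A y /\ compeq A x y.

(* the set of components of A (vertex set of the Gallai quotient) *)
Definition components (A : V -> Prop) : (V -> Prop) -> Prop :=
  fun C => exists x, A x /\ C = comp A x.

(* the set of values d(x,y), x in X, y in Y; for disjoint non-empty modules
   this is the singleton {d(X,Y)} *)
Definition dval (X Y : V -> Prop) : W -> Prop :=
  fun w => exists x y, X x /\ Y y /\ d x y = w.

(* Q is a module of the Gallai quotient of A, whose arcs are labelled by
   (I,J) |-> d(I,J) *)
Definition quotient_module (A : V -> Prop) (Q : (V -> Prop) -> Prop) : Prop :=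
  (forall I, Q I -> components A I) /\
  forall I J J', components A I -> ~ Q I -> Q J -> Q J' ->
    dval I J = dval I J' /\ dval J I = dval J' I.

Definition quotient_prime (A : V -> Prop) : Prop :=
  (exists I1 I2 I3, components A I1 /\ components A I2 /\ components A I3 /\
     I1 <> I2 /\ I1 <> I3 /\ I2 <> I3) /\
  forall Q, quotient_module A Q ->
    (forall I, ~ Q I) \/
    (exists I0, forall I, Q I <-> I = I0) \/
    (forall I, Q I <-> components A I).

Definition type_of (A : V -> Prop) : W -> Prop :=
  fun w => exists I J, components A I /\ components A J /\ I <> J /\ dval I J w.

End BinStruct.

(* Main.v *)
Require Import Defs.
From Stdlib Require Import Classical FunctionalExtensionality PropExtensionality.

Lemma union_mod {V W} (d : V -> V -> W) (A B : V -> Prop) p :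
  is_module d A -> is_module d B -> A p -> B p ->
  is_module d (fun z => A z \/ B z).
Proof.
  intros HA HB Ap Bp x y y' Hx Hy Hy'.
  assert (nA : ~ A x) by tauto. assert (nB : ~ B x) by tauto.
  assert (G : forall t, A t \/ B t -> d x t = d x p /\ d t x = d p x).
  { intros t [Ht|Ht]; [apply HA|apply HB]; auto. }
  destruct (G y Hy), (G y' Hy'). split; congruence.
Qed.

Lemma mod_base {V W} (d : V -> V -> W) (A : V -> Prop) p : A p ->
  (forall x t, ~ A x -> A t -> d x t = d x p /\ d t x = d p x) -> is_module d A.
Proof.
  intros Ap H x y y' Hx Hy Hy'.
  destruct (H x y Hx Hy), (H x y' Hx Hy'). split; congruence.
Qed.

Lemma SM_strong {V W} (d : V -> V -> W) (Y : V -> Prop) p q : is_module d Y ->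
  set_eq Y (S_M d (fun z => z = p \/ z = q)) -> is_strong d Y.
Proof.
  intros HY Heq. split; [exact HY|]. intros B HB.
  destruct (classic (subset Y B)) as [h|h]; [left; exact h|].
  destruct (classic (subset B Y)) as [h2|h2]; [right; left; exact h2|].
  right; right. intros y Yy By.
  apply h2. intros b Bb. apply (proj2 (Heq b)). intros T [HTm HTs] HZ.
  destruct (classic (T b)) as [Tb|nTb]; [exact Tb|exfalso].
  assert (Ty : T y) by (apply (proj1 (Heq y) Yy); [split; assumption | exact HZ]).
  destruct (HTs B HB) as [s|[s|s]].
  - apply h. intros z Yz. apply s. apply (proj1 (Heq z) Yz); [split; assumption|exact HZ].
  - exact (nTb (s b Bb)).
  - exact (s y Ty By).
Qed.

Lemma strong_in {V W} (d : V -> V -> W) (Y R : V -> Prop) n y :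
  is_strong d Y -> is_module d R -> R n -> Y n -> Y y -> ~ R y -> subset R Y.
Proof.
  intros [_ SY] HR Rn Yn Yy nRy.
  destruct (SY R HR) as [s|[s|s]].
  - exfalso; exact (nRy (s y Yy)).
  - exact s.
  - exfalso; exact (s n Yn Rn).
Qed.

Lemma compeq_sym {V W} (d : V -> V -> W) A x y : compeq d A x y -> compeq d A y x.
Proof.
  intros [e|[B [SB [Bx [By [s ns]]]]]]; [left; auto|right; exists B; auto].
Qed.

Lemma compeq_trans {V W} (d : V -> V -> W) A x y z :
  compeq d A x y -> compeq d A y z -> compeq d A x z.
Proof.
  intros [e|[B1 [S1 [B1x [B1y [s1 ns1]]]]]].
  - subst; auto.
  - intros [e|[B2 [S2 [B2y [B2z [s2 ns2]]]]]].
    + subst. right; exists B1; auto.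
    + destruct (proj2 S1 B2 (proj1 S2)) as [h|[h|h]].
      * right; exact (ex_intro _ B2 (conj S2 (conj (h x B1x) (conj B2z (conj s2 ns2))))).
      * right; exact (ex_intro _ B1 (conj S1 (conj B1x (conj (h z B2z) (conj s1 ns1))))).
      * exfalso; exact (h y B1y B2y).
Qed.

Lemma compeq_in {V W} (d : V -> V -> W) A x y : A x -> compeq d A x y -> A y.
Proof.
  intros Ax [e|[B [_ [_ [By [s _]]]]]]; [subst; auto|auto].
Qed.

Lemma comp_eq {V W} (d : V -> V -> W) A x y : compeq d A x y -> comp d A x = comp d A y.
Proof.
  intros H. extensionality z. apply propositional_extensionality.
  unfold comp; split; intros [Az Hc]; split; auto.
  - eapply compeq_trans; [apply compeq_sym; exact H|exact Hc].
  - eapply compeq_trans; [exact H|exact Hc].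
Qed.

Lemma comp_mod {V W} (d : V -> V -> W) A x : is_module d A -> A x -> is_module d (comp d A x).
Proof.
  intros HA Ax. apply (mod_base d _ x); [split; [auto|left; auto]|].
  intros z t nz [At Ct].
  destruct (classic (A z)) as [Az|nAz]; [|apply HA; auto].
  assert (nc : ~ compeq d A x z) by (intro; apply nz; split; auto).
  destruct Ct as [e|[B [SB [Bx [Bt [s ns]]]]]]; [subst; auto|].
  assert (nB : ~ B z) by (intro Bz; apply nc; right; exists B; auto).
  apply (proj1 SB); auto.
Qed.

Lemma comp_const {V W} (d : V -> V -> W) (I J : V -> Prop) x1 x2 y1 y2 :
  is_module d I -> is_module d J -> I x1 -> I x2 -> J y1 -> J y2 -> ~ J x2 -> ~ I y1 ->
  d x1 y1 = d x2 y2.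
Proof.
  intros HI HJ h1 h2 h3 h4 n1 n2.
  destruct (HI y1 x1 x2 n2 h1 h2) as [_ e1].
  destruct (HJ x2 y1 y2 n1 h3 h4) as [e2 _]. congruence.
Qed.

Lemma H1 {V W} (d : V -> V -> W) (Y S : V -> Prop) s1 s2 k :
  is_module d S -> subset S Y -> S s1 -> S s2 -> ~ compeq d Y s1 s2 -> Y k -> ~ S k ->
  exists R, is_module d R /\ (exists n, S n /\ R n) /\ (exists r, R r /\ ~ S r)
    /\ (exists w, S w /\ ~ R w).
Proof.
  intros HS sub h1 h2 nc Yk nSk.
  apply NNPP; intro Hno. apply nc. right. exists S. split; [split; [exact HS|]|].
  - intros B HB.
    destruct (classic (exists n, S n /\ B n)) as [[n [Sn Bn]]|hn].
    + destruct (classic (exists r, B r /\ ~ S r)) as [[r [Br nSr]]|hr].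
      * destruct (classic (exists w, S w /\ ~ B w)) as [[w [Sw nBw]]|hw].
        -- exfalso; apply Hno; exists B; split; [auto|split; [eauto|split; eauto]].
        -- left. intros z Sz. apply NNPP; intro; apply hw; eauto.
      * right; left. intros z Bz. apply NNPP; intro; apply hr; eauto.
    + right; right. intros z Sz Bz. apply hn; eauto.
  - split; [exact h1|split; [exact h2|split; [exact sub|]]]. intro h. apply nSk. apply h. exact Yk.
Qed.

Definition Lmax {V W} (d : V -> V -> W) (u v : V) : V -> Prop :=
  fun z => exists B, is_module d B /\ B u /\ ~ B v /\ B z.

Lemma Lmod {V W} (d : V -> V -> W) u v : is_module d (Lmax d u v).
Proof.
  intros z y y' nz [B1 [M1 [u1 [v1 y1]]]] [B2 [M2 [u2 [v2 y2]]]].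
  assert (z1 : ~ B1 z) by (intro; apply nz; exists B1; auto).
  assert (z2 : ~ B2 z) by (intro; apply nz; exists B2; auto).
  destruct (M1 z y u z1 y1 u1), (M2 z y' u z2 y2 u2). split; congruence.
Qed.

Lemma Lmax_nv {V W} (d : V -> V -> W) u v : ~ Lmax d u v v.
Proof. intros [B [_ [_ [nv bv]]]]; auto. Qed.

Lemma Lmax_u {V W} (d : V -> V -> W) u v n : Lmax d u v n -> Lmax d u v u.
Proof. intros [B [M [Bu [nv _]]]]; exists B; auto. Qed.

Lemma caseL {V W} (d : V -> V -> W) u v n R r w :
  Lmax d u v n -> Lmax d v u n -> is_module d R ->
  Lmax d u v w -> ~ R w -> R r -> ~ Lmax d u v r -> ~ Lmax d v u r ->
  R u -> R v -> False.
Proof.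
  intros Ln Kn HR Lw nRw Rr nLr nKr Ru Rv.
  set (L := Lmax d u v) in *. set (K := Lmax d v u) in *.
  assert (HL : is_module d L) by apply Lmod.
  assert (HK : is_module d K) by apply Lmod.
  assert (Lu : L u) by (eapply Lmax_u; exact Ln).
  assert (Kv : K v) by (eapply Lmax_u; exact Kn).
  assert (nLv : ~ L v) by apply Lmax_nv.
  assert (nKu : ~ K u) by apply Lmax_nv.
  set (P := fun z => L z \/ K z).
  assert (HP : is_module d P) by (apply (union_mod d L K n); auto).
  set (PR := fun z => P z \/ R z).
  assert (HPR : is_module d PR) by (apply (union_mod d P R u); auto; left; auto).
  set (K' := fun z => K z \/ (R z /\ ~ L z /\ ~ K z)).
  assert (HK' : is_module d K').
  { apply (mod_base d K' v); [left; auto|].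
    intros y t ny [Kt|[Rt [nLt nKt]]].
    - apply HK; auto. intro; apply ny; left; auto.
    - assert (nPt : ~ P t) by (intros [h|h]; auto).
      destruct (classic (P y)) as [Py|nPy].
      + assert (Ly : L y) by (destruct Py as [h|h]; auto; exfalso; apply ny; left; auto).
        destruct (HP t y u nPt Py (or_introl Lu)) as [e1a e1b].
        destruct (HP t u w nPt (or_introl Lu) (or_introl Lw)) as [e2a e2b].
        destruct (HR w t u nRw Rt Ru) as [e3a e3b].
        destruct (HL v y u nLv Ly Lu) as [e4a e4b].
        destruct (HL v w u nLv Lw Lu) as [e5a e5b].
        destruct (HR w u v nRw Ru Rv) as [e6a e6b].
        split; congruence.
      + assert (nRy : ~ R y) by (intro Ry; apply ny; right; split; [auto|split; intro; apply nPy; [left|right]; auto]).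
        apply HPR; [intros [h|h]; auto|right; auto|left; right; auto].
  }
  assert (K'r : K' r) by (right; auto).
  apply nKr. exists K'. split; [auto|split; [left; auto|split; [|auto]]].
  intros [h|[_ [h _]]]; auto.
Qed.

Lemma LK_no_overlap {V W} (d : V -> V -> W) u v n R r w p :
  Lmax d u v n -> Lmax d v u n -> is_module d R ->
  (Lmax d u v w \/ Lmax d v u w) -> ~ R w -> R r -> ~ Lmax d u v r -> ~ Lmax d v u r ->
  (Lmax d u v p \/ Lmax d v u p) -> R p -> False.
Proof.
  intros Ln Kn HR Pw nRw Rr nLr nKr Pp Rp.
  assert (Lu : Lmax d u v u) by (eapply Lmax_u; exact Ln).
  assert (Kv : Lmax d v u v) by (eapply Lmax_u; exact Kn).
  assert (meetL : forall q, Lmax d u v q -> R q -> R v).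
  { intros q Lq Rq. apply NNPP; intro nRv.
    apply nLr. exists (fun z => Lmax d u v z \/ R z).
    split; [apply (union_mod d _ _ q); auto; apply Lmod|].
    split; [left; auto|split; [|right; auto]].
    intros [h|h]; [apply (Lmax_nv d u v h)|auto]. }
  assert (meetK : forall q, Lmax d v u q -> R q -> R u).
  { intros q Kq Rq. apply NNPP; intro nRu.
    apply nKr. exists (fun z => Lmax d v u z \/ R z).
    split; [apply (union_mod d _ _ q); auto; apply Lmod|].
    split; [left; auto|split; [|right; auto]].
    intros [h|h]; [apply (Lmax_nv d v u h)|auto]. }
  assert (Ru : R u /\ R v).
  { destruct Pp as [Lp|Kp].
    - assert (Rv : R v) by (apply (meetL p); auto). split; auto. apply (meetK v); auto.
    - assert (Ru : R u) by (apply (meetK p); auto). split; auto. apply (meetL u); auto. }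
  destruct Ru as [Ru Rv].
  destruct Pw as [Lw|Kw].
  - apply (caseL d u v n R r w); auto.
  - apply (caseL d v u n R r w); auto.
Qed.

Definition csplit {V W} (d : V -> V -> W) (Y : V -> Prop) (c : W) (S : V -> Prop) : Prop :=
  subset S Y /\ forall x y, S x -> Y y -> ~ S y -> d x y = c /\ d y x = c.

Lemma csplit_compl {V W} (d : V -> V -> W) Y c S :
  csplit d Y c S -> csplit d Y c (fun z => Y z /\ ~ S z).
Proof.
  intros [sub HS]. split; [intros z [h _]; auto|].
  intros x y [Yx nSx] Yy nS'y.
  assert (Sy : S y) by (apply NNPP; intro; apply nS'y; auto).
  destruct (HS y x Sy Yx nSx). auto.
Qed.

Lemma complete {V W} (d : V -> V -> W) (Y C : V -> Prop) u v c :
  is_module d Y -> is_strong d Y -> csplit d Y c C -> C u -> Y v -> ~ C v ->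
  forall s t, Y s -> Y t -> ~ compeq d Y s t -> d s t = c.
Proof.
  intros HY SY HC Cu Yv nCv s t Ys Yt nst.
  set (Sep := fun z => exists S0, csplit d Y c S0 /\ S0 s /\ ~ S0 z).
  destruct (classic (Sep t)) as [[S0 [[sub HS] [Ss nSt]]]|nsep]; [exact (proj1 (HS s t Ss Yt nSt))|exfalso].
  set (N := fun z => Y z /\ ~ Sep z).
  assert (nSs : ~ Sep s) by (intro hh; destruct hh as [S1 [_ [h1 h2]]]; auto).
  assert (inS : forall z S0, N z -> csplit d Y c S0 -> S0 s -> S0 z).
  { intros z S0 [_ nz] cs Ss. apply NNPP; intro h. apply nz. exists S0; auto. }
  assert (HN : is_module d N).
  { apply (mod_base d N s); [split; auto|].
    intros z t' nz Nt'.
    destruct (classic (Y z)) as [Yz|nYz].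
    - assert (Sz : Sep z) by (apply NNPP; intro; apply nz; split; auto).
      destruct Sz as [S0 [cs [Ss nSz]]].
      pose proof (inS t' S0 Nt' cs Ss) as St'.
      destruct cs as [sub HS].
      destruct (HS t' z St' Yz nSz), (HS s z Ss Yz nSz). split; congruence.
    - apply HY; auto. apply Nt'. }
  assert (subN : subset N Y) by (intros z [h _]; auto).
  assert (Hk : exists k, Y k /\ ~ N k).
  { destruct (classic (C s)) as [Cs|nCs].
    - exists v. split; auto. intros [_ h]; apply h. exists C; auto.
    - exists u. split; [apply (proj1 HC); auto|]. intros [_ h]; apply h.
      exists (fun z => Y z /\ ~ C z). split; [apply csplit_compl; auto|].
      split; [split; auto|]. intros [_ h']; auto. }
  destruct Hk as [k [Yk nNk]].
  destruct (H1 d Y N s t k HN subN (conj Ys nSs) (conj Yt nsep) nst Yk nNk)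
    as [R [HR [[n [Nn Rn]] [[r [Rr nNr]] [w [Nw nRw]]]]]].
  assert (subR : subset R Y) by (apply (strong_in d Y R n w); auto).
  assert (Sr : Sep r) by (apply NNPP; intro; apply nNr; split; auto).
  set (S2 := fun z => N z /\ R z).
  assert (cs2 : csplit d Y c S2).
  { split; [intros z [h _]; auto|].
    intros x y [Nx Rx] Yy nS2y.
    destruct (classic (N y)) as [Ny|nNy].
    - assert (nRy : ~ R y) by (intro; apply nS2y; split; auto).
      destruct (HR y x r nRy Rx Rr) as [e1 e2].
      destruct Sr as [S0 [cs [Ss nSr]]].
      pose proof (inS y S0 Ny cs Ss) as Sy.
      destruct cs as [sub HS]. destruct (HS y r Sy (subR r Rr) nSr).
      split; congruence.
    - assert (Sy : Sep y) by (apply NNPP; intro; apply nNy; split; auto).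
      destruct Sy as [S0 [cs [Ss nSy]]].
      pose proof (inS x S0 Nx cs Ss) as Sx.
      destruct cs as [sub HS]. apply HS; auto. }
  destruct (classic (S2 s)) as [S2s|nS2s].
  - apply (proj2 Nw). exists S2. split; auto. split; auto. intros [_ h]; auto.
  - apply (proj2 Nn). exists (fun z => Y z /\ ~ S2 z). split; [apply csplit_compl; auto|].
    split; [split; auto|]. intros [_ h]; apply h; split; auto.
Qed.

Lemma XYa {V W} (d : V -> V -> W) (X Y : V -> Prop) x0 y0 x y :
  is_module d X -> is_module d Y -> disjoint X Y -> X x0 -> Y y0 -> X x -> Y y ->
  d x y = d x0 y0 /\ d y x = d y0 x0.
Proof.
  intros HX HY dj X0 Y0 Xx Yy. split.
  - apply (comp_const d X Y); auto; [intro h; exact (dj x0 X0 h)|intro h; exact (dj y h Yy)].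
  - apply (comp_const d Y X); auto; [intro h; exact (dj y0 h Y0)|intro h; exact (dj x Xx h)].
Qed.

Lemma comp_refl {V W} (d : V -> V -> W) (Y : V -> Prop) t : Y t -> comp d Y t t.
Proof. intros; split; [auto|left; auto]. Qed.

Lemma realized {V W} (d : V -> V -> W) (Y : V -> Prop) w :
  type_of d Y w -> exists i j, Y i /\ Y j /\ ~ compeq d Y i j /\ d i j = w.
Proof.
  intros [I [J [[s [Ys ->]] [[t [Yt ->]] [neq [i [j [[Yi ci] [[Yj cj] e]]]]]]]]].
  exists i, j. split; [auto|split; [auto|split; [|auto]]].
  intro c. apply neq. apply comp_eq.
  eapply compeq_trans; [exact ci|]. eapply compeq_trans; [exact c|]. apply compeq_sym; auto.
Qed.

Lemma tin {V W} (d : V -> V -> W) (X Y : V -> Prop) x0 y0 s t :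
  is_module d X -> is_module d Y -> disjoint X Y -> X x0 -> Y y0 ->
  (forall w, (dval d X Y w \/ dval d Y X w) <-> type_of d Y w) ->
  Y s -> Y t -> ~ compeq d Y s t -> d s t = d x0 y0 \/ d s t = d y0 x0.
Proof.
  intros HX HY dj X0 Y0 Ht Ys Yt nst.
  assert (T : type_of d Y (d s t)).
  { exists (comp d Y s), (comp d Y t). split; [exists s; auto|].
    split; [exists t; auto|]. split.
    - intro e. pose proof (comp_refl d Y t Yt) as h. rewrite <- e in h.
      destruct h as [_ h]; auto.
    - exists s, t. split; [apply comp_refl; auto|split; [apply comp_refl; auto|auto]]. }
  apply Ht in T. destruct T as [[x [y [Xx [Yy e]]]]|[y [x [Yy [Xx e]]]]].
  - left. rewrite <- e. exact (proj1 (XYa d X Y x0 y0 x y HX HY dj X0 Y0 Xx Yy)).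
  - right. rewrite <- e. exact (proj2 (XYa d X Y x0 y0 x y HX HY dj X0 Y0 Xx Yy)).
Qed.

Lemma finish {V W} (d : V -> V -> W) (X Y C : V -> Prop) x0 y0 u v :
  is_module d X -> is_module d Y -> disjoint X Y -> X x0 -> Y y0 -> is_strong d Y ->
  is_module d (fun z => X z \/ Y z) ->
  (forall w, (dval d X Y w \/ dval d Y X w) <-> type_of d Y w) ->
  subset C Y -> C u -> Y v -> ~ C v -> ~ compeq d Y u v ->
  (forall x y, C x -> Y y -> ~ C y -> d x y = d u v /\ d y x = d v u) -> False.
Proof.
  intros HX HY dj X0 Y0 SY HXY Ht sub Cu Yv nCv nuv Hs.
  assert (Yu : Y u) by auto.
  assert (nYx0 : ~ Y x0) by (intro; eapply dj; eauto).
  assert (key : (d u v = d x0 y0 /\ d v u = d y0 x0) \/ (d u v = d y0 x0 /\ d v u = d x0 y0)).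
  { assert (comp_case : d u v = d v u -> d u v = d x0 y0 /\ d v u = d y0 x0).
    { intro e.
      assert (HC : csplit d Y (d u v) C).
      { split; auto. intros x y Cx Yy nCy. destruct (Hs x y Cx Yy nCy). split; congruence. }
      pose proof (complete d Y C u v (d u v) HY SY HC Cu Yv nCv) as cpl.
      assert (Ta : type_of d Y (d x0 y0)) by (apply Ht; left; exists x0, y0; auto).
      assert (Tb : type_of d Y (d y0 x0)) by (apply Ht; right; exists y0, x0; auto).
      destruct (realized d Y _ Ta) as [i [j [Yi [Yj [nij e1]]]]].
      destruct (realized d Y _ Tb) as [i' [j' [Yi' [Yj' [nij' e2]]]]].
      pose proof (cpl i j Yi Yj nij). pose proof (cpl i' j' Yi' Yj' nij').
      split; congruence. }
    destruct (tin d X Y x0 y0 u v HX HY dj X0 Y0 Ht Yu Yv nuv) as [e1|e1];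
    destruct (tin d X Y x0 y0 v u HX HY dj X0 Y0 Ht Yv Yu
               (fun h => nuv (compeq_sym d Y v u h))) as [e2|e2].
    - left; apply comp_case; congruence.
    - left; auto.
    - right; auto.
    - left; apply comp_case; congruence. }
  assert (ovl : forall B y1 y2, is_module d B -> B x0 -> B y1 -> Y y1 -> Y y2 -> ~ B y2 -> False).
  { intros B y1 y2 HB Bx0 By1 Yy1 Yy2 nBy2.
    pose proof (strong_in d Y B y1 y2 SY HB By1 Yy1 Yy2 nBy2) as s. auto. }
  destruct key as [[e1 e2]|[e1 e2]].
  - apply (ovl (fun z => X z \/ C z) u v); auto.
    + apply (mod_base d _ x0); [left; auto|].
      intros y t ny [Xt|Ct].
      * apply HX; auto.
      * destruct (classic (Y y)) as [Yy|nYy].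
        -- assert (nCy : ~ C y) by auto.
           destruct (Hs t y Ct Yy nCy) as [f1 f2].
           destruct (XYa d X Y x0 y0 x0 y HX HY dj X0 Y0 X0 Yy) as [g1 g2].
           split; congruence.
        -- apply HXY; [intros [h|h]; auto|right; auto|left; auto].
    + intros [h|h]; [eapply dj; eauto|auto].
  - apply (ovl (fun z => X z \/ (Y z /\ ~ C z)) v u); auto.
    + apply (mod_base d _ x0); [left; auto|].
      intros y t ny [Xt|[Yt nCt]].
      * apply HX; auto.
      * destruct (classic (Y y)) as [Yy|nYy].
        -- assert (Cy : C y) by (apply NNPP; intro; apply ny; right; auto).
           destruct (Hs y t Cy Yt nCt) as [f1 f2].
           destruct (XYa d X Y x0 y0 x0 y HX HY dj X0 Y0 X0 Yy) as [g1 g2].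
           split; congruence.
        -- apply HXY; [intros [h|h]; auto|right; auto|left; auto].
    + intros [h|[_ h]]; [eapply dj; eauto|auto].
Qed.

Lemma comp_neq {V W} (d : V -> V -> W) (Y : V -> Prop) s t :
  Y t -> ~ compeq d Y s t -> comp d Y s <> comp d Y t.
Proof.
  intros Yt n e. pose proof (comp_refl d Y t Yt) as h. rewrite <- e in h.
  destruct h as [_ h]; auto.
Qed.

Lemma Lsub {V W} (d : V -> V -> W) (Y : V -> Prop) u v :
  is_strong d Y -> Y u -> Y v -> subset (Lmax d u v) Y.
Proof.
  intros SY Yu Yv z [B [HB [Bu [nBv Bz]]]].
  exact (strong_in d Y B u v SY HB Bu Yu Yv nBv z Bz).
Qed.

Theorem lemma6p9 (V W : Type) (d : V -> V -> W) (X Y : V -> Prop) :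
  is_module d X -> is_module d Y -> disjoint X Y ->
  (exists x, X x) -> (exists y, Y y) ->
  is_robust d Y ->
  (exists y1 y2, Y y1 /\ Y y2 /\ y1 <> y2) ->
  ~ quotient_prime d Y ->
  (forall w, (dval d X Y w \/ dval d Y X w) <-> type_of d Y w) ->
  ~ is_module d (fun z => X z \/ Y z).
Proof.
  intros HX HY dj [x0 X0] [y0 Y0] Hrob [y1 [y2 [Y1 [Y2 n12]]]] nprime Ht HXY.
  destruct Hrob as [_ [[x Hs]|[p [q [npq Hs]]]]].
  { apply n12. rewrite (proj1 (Hs y1) Y1), (proj1 (Hs y2) Y2). reflexivity. }
  pose proof (SM_strong d Y p q HY Hs) as SY.
  assert (Yp : Y p) by (apply (proj2 (Hs p)); intros B _ sub; apply sub; left; auto).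
  assert (Yq : Y q) by (apply (proj2 (Hs q)); intros B _ sub; apply sub; right; auto).
  assert (npqc : ~ compeq d Y p q).
  { intros [e|[B [SB [Bp [Bq [sub nsub]]]]]]; [contradiction|].
    apply nsub. intros z Yz. apply (proj1 (Hs z) Yz); [exact SB|].
    intros t [->| ->]; auto. }
  destruct (classic (exists I1 I2 I3, components d Y I1 /\ components d Y I2 /\
     components d Y I3 /\ I1 <> I2 /\ I1 <> I3 /\ I2 <> I3)) as [three|nthree].
  - assert (nall : ~ forall Q, quotient_module d Y Q ->
      (forall I, ~ Q I) \/ (exists I0, forall I, Q I <-> I = I0) \/
      (forall I, Q I <-> components d Y I)) by (intro h; apply nprime; split; auto).
    apply not_all_ex_not in nall. destruct nall as [Q hQ].
    apply imply_to_and in hQ. destruct hQ as [qm ntriv].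
    apply not_or_and in ntriv. destruct ntriv as [ne nrest].
    apply not_or_and in nrest. destruct nrest as [nsing nall2].
    apply not_all_ex_not in ne. destruct ne as [I QI]. apply NNPP in QI.
    destruct qm as [Qcomp Qmod].
    destruct (Qcomp I QI) as [x1 [Yx1 ->]].
    destruct (classic (exists J, Q J /\ J <> comp d Y x1)) as [[J [QJ nJ]]|nJ];
      [|exfalso; apply nsing; exists (comp d Y x1); intro I'; split;
        [intro QI'; apply NNPP; intro ne'; apply nJ; exists I'; auto|intros ->; auto]].
    destruct (Qcomp J QJ) as [x2 [Yx2 ->]].
    destruct (classic (exists K, components d Y K /\ ~ Q K)) as [[K [cK nQK]]|nK];
      [|exfalso; apply nall2; intro I'; split;
        [apply Qcomp|intro cI; apply NNPP; intro; apply nK; exists I'; auto]].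
    destruct cK as [k [Yk ->]].
    set (U := fun z => Y z /\ Q (comp d Y z)).
    assert (HU : is_module d U).
    { apply (mod_base d U x1); [split; auto|].
      intros z t nz [Yt Qt].
      destruct (classic (Y z)) as [Yz|nYz]; [|apply HY; auto].
      assert (nQz : ~ Q (comp d Y z)) by (intro; apply nz; split; auto).
      assert (cz : components d Y (comp d Y z)) by (exists z; auto).
      destruct (Qmod _ _ _ cz nQz Qt QI) as [E1 E2].
      assert (ncz : forall t', Q (comp d Y t') -> ~ compeq d Y z t').
      { intros t' Qt' c. apply nQz. rewrite (comp_eq d Y z t' c). auto. }
      assert (HCz : is_module d (comp d Y z)) by (apply comp_mod; auto).
      assert (HCx : is_module d (comp d Y x1)) by (apply comp_mod; auto).
      split.
      - assert (D : dval d (comp d Y z) (comp d Y t) (d z t))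
          by (exists z, t; split; [apply comp_refl|split; [apply comp_refl|]]; auto).
        rewrite E1 in D. destruct D as [z'' [t'' [Cz'' [Ct'' e]]]].
        rewrite <- e.
        apply (comp_const d (comp d Y z) (comp d Y x1) z'' z t'' x1); auto;
          [apply comp_refl; auto|apply comp_refl; auto| |].
        + intros [_ c]. apply (ncz x1 QI). apply compeq_sym; auto.
        + intros [_ c]. apply (ncz x1 QI).
          eapply compeq_trans; [exact c|]. apply compeq_sym. exact (proj2 Ct'').
      - assert (D : dval d (comp d Y t) (comp d Y z) (d t z))
          by (exists t, z; split; [apply comp_refl|split; [apply comp_refl|]]; auto).
        rewrite E2 in D. destruct D as [t'' [z'' [Ct'' [Cz'' e]]]].
        rewrite <- e.
        apply (comp_const d (comp d Y x1) (comp d Y z) t'' x1 z'' z); auto;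
          [apply comp_refl; auto|apply comp_refl; auto| |].
        + intros [_ c]. apply (ncz x1 QI). exact c.
        + intros [_ c]. apply (ncz x1 QI).
          eapply compeq_trans; [exact (proj2 Cz'')|]. apply compeq_sym; exact c. }
    assert (subU : subset U Y) by (intros z [h _]; auto).
    assert (nc12 : ~ compeq d Y x1 x2).
    { intro c. apply nJ. symmetry. apply comp_eq; auto. }
    destruct (H1 d Y U x1 x2 k HU subU (conj Yx1 QI) (conj Yx2 QJ) nc12 Yk
                (fun h => nQK (proj2 h)))
      as [R [HR [[n [Un Rn]] [[r [Rr nUr]] [w [Uw nRw]]]]]].
    assert (subR : subset R Y) by (apply (strong_in d Y R n w SY HR Rn (subU n Un) (subU w Uw) nRw)).
    assert (Yr : Y r) by auto. assert (Yw : Y w) by auto.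
    assert (nwr : ~ compeq d Y w r).
    { intro c. apply nUr. split; auto. rewrite <- (comp_eq d Y w r c). exact (proj2 Uw). }
    assert (Ln : Lmax d w r n) by (exists U; auto).
    assert (Kn : Lmax d r w n) by (exists R; auto).
    assert (Lw : Lmax d w r w) by (eapply Lmax_u; exact Ln).
    assert (Kr : Lmax d r w r) by (eapply Lmax_u; exact Kn).
    assert (subL : subset (Lmax d w r) Y) by (apply Lsub; auto).
    assert (subK : subset (Lmax d r w) Y) by (apply Lsub; auto).
    assert (cover : forall y, Y y -> Lmax d w r y \/ Lmax d r w y).
    { intros y Yy. apply NNPP; intro ny.
      set (P := fun z => Lmax d w r z \/ Lmax d r w z).
      assert (HP : is_module d P) by (apply (union_mod d _ _ n); auto; apply Lmod).
      assert (subP : subset P Y) by (intros z [h|h]; auto).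
      destruct (H1 d Y P w r y HP subP (or_introl Lw) (or_intror Kr) nwr Yy ny)
        as [R' [HR' [[n' [Pn' R'n']] [[r' [R'r' nPr']] [w' [Pw' nR'w']]]]]].
      apply (LK_no_overlap d w r n R' r' w' n'); auto;
        intro; apply nPr'; [left|right]; auto. }
    apply (finish d X Y (fun z => Lmax d w r z /\ ~ Lmax d r w z) x0 y0 w r); auto.
    + intros z [h _]; auto.
    + split; auto. apply Lmax_nv.
    + intros [h _]. exact (Lmax_nv d w r h).
    + intros x y [Lx nKx] Yy nCy.
      assert (Ky : Lmax d r w y).
      { destruct (cover y Yy) as [h|h]; auto. apply NNPP; intro; apply nCy; split; auto. }
      destruct (Lmod d r w x y r nKx Ky Kr) as [f1 f2].
      destruct (Lmod d w r r x w (Lmax_nv d w r) Lx Lw) as [g1 g2].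
      split; congruence.
  - apply (finish d X Y (comp d Y p) x0 y0 p q); auto.
    + intros z [h _]; auto.
    + apply comp_refl; auto.
    + intros [_ h]; auto.
    + intros x y [Yx cx] Yy nCy.
      assert (cq : compeq d Y q y).
      { apply NNPP; intro ncq. apply nthree.
        exists (comp d Y p), (comp d Y q), (comp d Y y).
        split; [exists p; auto|split; [exists q; auto|split; [exists y; auto|]]].
        split; [apply comp_neq; auto|split; [apply comp_neq; auto|apply comp_neq; auto]].
        intro c; apply nCy; split; auto. }
      assert (HCp : is_module d (comp d Y p)) by (apply comp_mod; auto).
      assert (HCq : is_module d (comp d Y q)) by (apply comp_mod; auto).
      split.
      * apply (comp_const d (comp d Y p) (comp d Y q) x p y q); auto.
        -- split; auto.
        -- apply comp_refl; auto.
        -- split; auto.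
        -- apply comp_refl; auto.
        -- intros [_ c]. apply npqc. apply compeq_sym; auto.
      * apply (comp_const d (comp d Y q) (comp d Y p) y q x p); auto.
        -- split; auto.
        -- apply comp_refl; auto.
        -- split; auto.
        -- apply comp_refl; auto.
        -- intros [_ c]. apply npqc; auto.
        -- intros [_ c]. apply npqc. eapply compeq_trans; [exact cx|]. apply compeq_sym; auto.
Qed.
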